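(* Let $\beta\ne0$, $H\ge2$, and $\Delta_{\min}>0$. (i) If $|\beta|(H-1)\ge\log 4$, $H\ge2$, $\Delta_{\min}\le\frac{1}{8|\beta|}$, and $K\asymp\frac{1}{|\beta|^2\Delta_{\min}^2}(e^{|\beta|(H-1)}-1)$, then for any algorithm there is an episodic MDP with horizon $H$ and minimal cascaded gap $\Delta_{\min}$ on which $\mathbb{E}[\mathcal{R}(K)]\gtrsim\frac{e^{|\beta|(H-1)}-1}{|\beta|^2\Delta_{\min}}$. (ii) If $|\beta|(H-1)\le\log H$, $H\ge8$, $\Delta_{\min}\le\frac{1}{4|\beta|H}(e^{|\beta|(H-1)}-1)$, and $K\asymp\frac{1}{H|\beta|^2\Delta_{\min}^2}(e^{|\beta|(H-1)}-1)^2$, then for any algorithm there is an episodic MDP with horizon $H$ and minimal cascaded gap $\Delta_{\min}$ on which $\mathbb{E}[\mathcal{R}(K)]\gtrsim\frac{H}{\Delta_{\min}}$.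
   Context: Episodic finite-horizon tabular MDP: finite states $\mathcal{S}$, finite actions $\mathcal{A}$, horizon $H$, $K$ episodes, transitions $\mathcal{P}_h(\cdot\mid s,a)$, deterministic rewards $r_h:\mathcal{S}\times\mathcal{A}\to[0,1]$, fixed initial state $s_1$. For a policy $\pi=(\pi_h:\mathcal{S}\to\mathcal{A})$ and risk parameter $\beta\ne0$: $V_h^\pi(s)=\frac1\beta\log\mathbb{E}[e^{\beta\sum_{i=h}^H r_i(s_i,\pi_i(s_i))}\mid s_h=s]$, $Q_h^\pi(s,a)$ the same with $a_h=a$ and $\pi$ thereafter; $V_h^*=\sup_\pi V_h^\pi$ attained by an optimal $\pi^*$, $Q^*_h=Q_h^{\pi^*}$. An algorithm chooses policy $\pi^k$ in episode $k$ based on past observations; regret $\mathcal{R}(K)=\sum_{k=1}^K(V_1^*-V_1^{\pi^k})(s_1)$. For a trajectory $\tau\in(\mathcal{S}\times\mathcal{A})^H$ with prefixes $\tau_h$ and $R(\tau_h)=\sum_{j\le h}r_j(s_j,a_j)$, $R(\tau_0)=0$, the cascaded gap is $\Delta_h(s,a;\tau_{h-1})=\psi_\beta e^{\beta R(\tau_{h-1})}[e^{\beta V^*_h(s)}-e^{\beta Q^*_h(s,a)}]$ with $\psi_\beta=1/\beta$ for $\beta>0$ and $e^{-\beta H}/\beta$ for $\beta<0$; the minimal cascaded gap $\Delta_{\min}$ is its minimal nonzero value over $(h,s,a,\tau)$. $x\gtrsim y$ means $x\ge cy$ for a universal $c>0$, and $x\asymp y$ means both $\lesssim$ and $\gtrsim$.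 *)

(* Defs.v *)
From HB Require Import structures.
From mathcomp Require Import all_boot all_order all_algebra.
From mathcomp Require Import all_classical all_reals all_analysis.
Set Implicit Arguments. Unset Strict Implicit. Unset Printing Implicit Defensive.
Import Order.TTheory GRing.Theory Num.Theory.
Local Open Scope ring_scope.
Local Open Scope classical_set_scope.

(* Episodic finite-horizon tabular MDP.  Steps are indexed 0..H-1
   (step h of the paper is the ordinal h-1).  *)

Section Types.
Variables (R : realType) (S A : finType) (H : nat).

Definition policy := {ffun 'I_H -> {ffun S -> A}}.

(* what the learner observes in one episode: its policy, the visited
   states (actions are pi_h(s_h)) and the obtained rewards *)
Definition obs := (policy * {ffun 'I_H -> S} * {ffun 'I_H -> R})%type.

(* a (possibly randomized) learning algorithm: given the history of past
   episodes it draws the policy of the next episode from a distribution *)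
Definition valid_alg (alg : seq obs -> policy -> R) : Prop :=
  forall hist, (forall pi, 0 <= alg hist pi) /\ \sum_(pi : policy) alg hist pi = 1.

(* transitions P h s a s' = P_h(s'|s,a), deterministic rewards in [0,1] *)
Definition valid_mdp (P : 'I_H -> S -> A -> S -> R) (r : 'I_H -> S -> A -> R) : Prop :=
  (forall h s a s', 0 <= P h s a s') /\
  (forall h s a, \sum_(s' : S) P h s a s' = 1) /\
  (forall h s a, 0 <= r h s a <= 1).
End Types.

Section MDP.
Variables (R : realType) (S A : finType) (H : nat) (beta : R).
Variables (P : 'I_H -> S -> A -> S -> R) (r : 'I_H -> S -> A -> R).

(* EW pi m h s = E[ exp(beta * sum_{i >= h} r_i(s_i, pi_i(s_i))) | s_h = s ]
   (m is recursion fuel, m = H suffices; for h >= H the sum is empty). *)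
Fixpoint EW (pi : policy S A H) (m h : nat) (s : S) : R :=
  match m with
  | 0 => 1
  | m'.+1 =>
    match (insub h : option 'I_H) with
    | Some i => let a := pi i s in
        expR (beta * r i s a) * \sum_(s' : S) P i s a s' * EW pi m' h.+1 s'
    | None => 1
    end
  end.

Definition Vpi (pi : policy S A H) (h : nat) (s : S) : R := ln (EW pi H h s) / beta.

Definition Vstar (h : nat) (s : S) : R := sup (range (fun pi : policy S A H => Vpi pi h s)).

(* Q_h^*(s,a) = Q_h^{pi*}(s,a) for an optimal pi*, i.e.
   (1/beta) log( e^{beta r_h(s,a)} E_{s'~P_h(.|s,a)}[ e^{beta V^*_{h+1}(s')} ] ). *)
Definition Qstar (i : 'I_H) (s : S) (a : A) : R :=
  ln (expR (beta * r i s a) *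
      \sum_(s' : S) P i s a s' * expR (beta * Vstar i.+1 s')) / beta.

Definition psi_beta : R :=
  if 0 < beta then beta^-1 else expR (- beta * H%:R) / beta.

(* cascaded gap Delta_h(s,a; tau_{h-1}); the prefix reward is the sum of
   rewards of the pairs of tau at steps strictly before h *)
Definition cgap (i : 'I_H) (s : S) (a : A) (tau : {ffun 'I_H -> S * A}) : R :=
  psi_beta * expR (beta * \sum_(j < H | (j < i)%N) r j (tau j).1 (tau j).2) *
  (expR (beta * Vstar i s) - expR (beta * Qstar i s a)).

Definition is_min_cgap (D : R) : Prop :=
  (exists i s a tau, cgap i s a tau != 0 /\ cgap i s a tau = D) /\
  (forall i s a tau, cgap i s a tau != 0 -> D <= cgap i s a tau).

(* next state of a state trajectory (default irrelevant, only used for i+1<H) *)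
Definition nxt (tau : {ffun 'I_H -> S}) (i : 'I_H) : S :=
  match (insub i.+1 : option 'I_H) with Some j => tau j | None => tau i end.

Definition trajprob (s1 : S) (pi : policy S A H) (tau : {ffun 'I_H -> S}) : R :=
  (if [forall i : 'I_H, (val i == 0%N) ==> (tau i == s1)] then 1 else 0) *
  \prod_(i : 'I_H | (i.+1 < H)%N) P i (tau i) (pi i (tau i)) (nxt tau i).

Definition obs_rew (pi : policy S A H) (tau : {ffun 'I_H -> S}) : {ffun 'I_H -> R} :=
  [ffun i => r i (tau i) (pi i (tau i))].

(* ExpReg alg s1 k hist = expected regret of the remaining k episodes,
   given the history hist: E[ sum_k (V_1^* - V_1^{pi^k})(s_1) ]. *)
Fixpoint ExpReg (alg : seq (obs R S A H) -> policy S A H -> R) (s1 : S)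
  (k : nat) (hist : seq (obs R S A H)) : R :=
  match k with
  | 0 => 0
  | k'.+1 => \sum_(pi : policy S A H) alg hist pi *
      ((Vstar 0 s1 - Vpi pi 0 s1) +
       \sum_(tau : {ffun 'I_H -> S}) trajprob s1 pi tau *
          ExpReg alg s1 k' (rcons hist (pi, tau, obs_rew pi tau)))
  end.

End MDP.

(* Main.v *)
Require Import Defs.
From HB Require Import structures.
From mathcomp Require Import all_boot all_order all_algebra.
From mathcomp Require Import all_classical all_reals all_analysis.
From mathcomp Require Import ring lra.
Import Order.TTheory GRing.Theory Num.Theory.
Set Implicit Arguments. Unset Strict Implicit. Unset Printing Implicit Defensive.
Local Open Scope ring_scope.

Lemma min_sqrt_le (R : realType) (a b x y D : R) :
  0 <= a -> 0 <= b -> 0 <= D -> 0 <= x -> 0 <= y -> (D <= x \/ D <= y) ->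
  D * (Num.sqrt (a * b) - (a + b) / 4) <= a * x + b * y.
Proof.
move=> a0 b0 D0 x0 y0 hxy.
rewrite sqrtrM //.
have ha := sqr_sqrtr a0; have hb := sqr_sqrtr b0.
have ua := sqrtr_ge0 a; have ub := sqrtr_ge0 b.
set u := Num.sqrt a in ha ua *; set v := Num.sqrt b in hb ub *.
rewrite -ha -hb.
case: hxy => h.
- have : D * (u * v - (u ^+ 2 + v ^+ 2) / 4) <= D * u ^+ 2.
    apply: ler_wpM2l => //. have := sqr_ge0 (2 * u - v); have := sqr_ge0 u; nra.
  move=> h1; apply: (le_trans h1).
  have : u ^+ 2 * D <= u ^+ 2 * x by apply: ler_wpM2l => //; nra.
  have : 0 <= v ^+ 2 * y by nra.
  nra.
- have : D * (u * v - (u ^+ 2 + v ^+ 2) / 4) <= D * v ^+ 2.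
    apply: ler_wpM2l => //. have := sqr_ge0 (2 * v - u); have := sqr_ge0 v; nra.
  move=> h1; apply: (le_trans h1).
  have : v ^+ 2 * D <= v ^+ 2 * y by apply: ler_wpM2l => //; nra.
  have : 0 <= u ^+ 2 * x by nra.
  nra.
Qed.

Section Info.
Variables (R : realType) (S A : finType) (H : nat) (beta : R).
Variables (PT PF : 'I_H -> S -> A -> S -> R) (r : 'I_H -> S -> A -> R).
Variables (alg : seq (obs R S A H) -> policy S A H -> R) (s1 : S).
Hypothesis halg : valid_alg alg.
Variables (Delta rho : R).
Hypothesis hD : 0 <= Delta.
Hypothesis hrho0 : 0 <= rho.
Hypothesis hrho1 : rho <= 1.
Let regT pi := Vstar beta PT r 0 s1 - Vpi beta PT r pi 0 s1.
Let regF pi := Vstar beta PF r 0 s1 - Vpi beta PF r pi 0 s1.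
Hypothesis hregT : forall pi, 0 <= regT pi.
Hypothesis hregF : forall pi, 0 <= regF pi.
Hypothesis hreg : forall pi, Delta <= regT pi \/ Delta <= regF pi.
Hypothesis htT : forall pi tau, 0 <= trajprob PT s1 pi tau.
Hypothesis htF : forall pi tau, 0 <= trajprob PF s1 pi tau.
Hypothesis hsT : forall pi, \sum_tau trajprob PT s1 pi tau <= 1.
Hypothesis hsF : forall pi, \sum_tau trajprob PF s1 pi tau <= 1.
Hypothesis hbc : forall pi,
  rho <= \sum_tau Num.sqrt (trajprob PT s1 pi tau * trajprob PF s1 pi tau).

Let ET := ExpReg beta PT r alg s1.
Let EF := ExpReg beta PF r alg s1.

Lemma claim k : forall (I : finType) (h : I -> seq (obs R S A H)) (a b : I -> R),
  (forall i, 0 <= a i) -> (forall i, 0 <= b i) ->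
  Delta * k%:R * (rho ^+ k * \sum_i Num.sqrt (a i * b i) - (\sum_i (a i + b i)) / 4)
  <= \sum_i (a i * ET k (h i) + b i * EF k (h i)).
Proof.
elim: k => [|k IH] I h a b ha hb.
  rewrite mulr0 mul0r; apply: sumr_ge0 => i _.
  by rewrite /ET /EF /= !mulr0 addr0.
set nh := fun (p : I * (policy S A H * {ffun 'I_H -> S})) =>
  rcons (h p.1) (p.2.1, p.2.2, obs_rew r p.2.1 p.2.2).
set a' := fun (p : I * (policy S A H * {ffun 'I_H -> S})) =>
  a p.1 * alg (h p.1) p.2.1 * trajprob PT s1 p.2.1 p.2.2.
set b' := fun (p : I * (policy S A H * {ffun 'I_H -> S})) =>
  b p.1 * alg (h p.1) p.2.1 * trajprob PF s1 p.2.1 p.2.2.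
have algp := fun hh pi => (halg hh).1 pi.
have algs := fun hh => (halg hh).2.
have ha' : forall p, 0 <= a' p.
  by move=> p; rewrite /a'; apply: mulr_ge0; [apply: mulr_ge0|]; [apply: ha|apply: algp|apply: htT].
have hb' : forall p, 0 <= b' p.
  by move=> p; rewrite /b'; apply: mulr_ge0; [apply: mulr_ge0|]; [apply: hb|apply: algp|apply: htF].
have e3 : forall f : I * (policy S A H * {ffun 'I_H -> S}) -> R,
    \sum_p f p = \sum_i \sum_pi \sum_tau f (i, (pi, tau)).
  move=> f; rewrite [RHS](eq_bigr (fun i => \sum_q f (i, q))); last first.
    by move=> i _; rewrite pair_bigA /=; apply: eq_bigr => -[].
  by rewrite pair_bigA /=; apply: eq_bigr => -[].
have eq1 : \sum_i (a i * ET k.+1 (h i) + b i * EF k.+1 (h i)) =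
   \sum_i \sum_pi alg (h i) pi * (a i * regT pi + b i * regF pi) +
   \sum_p (a' p * ET k (nh p) + b' p * EF k (nh p)).
  rewrite e3 -big_split /=; apply: eq_bigr => i _.
  rewrite /ET /EF /= !big_distrr -!big_split /=; apply: eq_bigr => pi _.
  rewrite big_split /= !mulrDr !big_distrr /=.
  have EE : forall (c d : R) (f g : {ffun 'I_H -> S} -> R),
      \sum_tau c * (d * (f tau * g tau)) = \sum_tau (c * d * f tau) * g tau.
    by move=> c d f g; apply: eq_bigr => tau _; rewrite !mulrA.
  rewrite !EE /a' /b' /nh /=; ring.
rewrite eq1.
set B := \sum_i Num.sqrt (a i * b i).
set Sm := \sum_i (a i + b i).
have B0 : 0 <= B by apply: sumr_ge0 => i _; apply: sqrtr_ge0.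
have rk0 : 0 <= rho ^+ k by apply: exprn_ge0.
have rk1 : rho ^+ k <= 1 by apply: exprn_ile1.
have h1 : Delta * (rho ^+ k.+1 * B - Sm / 4) <=
    \sum_i \sum_pi alg (h i) pi * (a i * regT pi + b i * regF pi).
  apply: (@le_trans _ _ (Delta * (B - Sm / 4))).
    apply: ler_wpM2l => //; rewrite lerD2r exprS.
    have : rho * rho ^+ k <= 1 by rewrite -[1]mul1r; apply: ler_pM.
    move=> hh; rewrite -[X in _ <= X]mul1r; apply: ler_wpM2r => //.
  rewrite /B /Sm big_distrl /= -sumrB big_distrr /=; apply: ler_sum => i _.
  apply: (@le_trans _ _ (\sum_pi alg (h i) pi * (Delta * (Num.sqrt (a i * b i) - (a i + b i) / 4)))).
    by rewrite -big_distrl /= algs mul1r.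
  apply: ler_sum => pi _; apply: ler_wpM2l; first exact: algp.
  by apply: min_sqrt_le.
have hB : rho * B <= \sum_p Num.sqrt (a' p * b' p).
  rewrite e3 /B big_distrr /=; apply: ler_sum => i _.
  have -> : \sum_pi \sum_tau Num.sqrt (a' (i, (pi, tau)) * b' (i, (pi, tau))) =
      \sum_pi Num.sqrt (a i * b i) * alg (h i) pi *
        \sum_tau Num.sqrt (trajprob PT s1 pi tau * trajprob PF s1 pi tau).
    apply: eq_bigr => pi _; rewrite big_distrr /=; apply: eq_bigr => tau _.
    rewrite /a' /b' /=.
    have -> : a i * alg (h i) pi * trajprob PT s1 pi tau *
       (b i * alg (h i) pi * trajprob PF s1 pi tau) =
       (a i * b i) * (alg (h i) pi ^+ 2 * (trajprob PT s1 pi tau * trajprob PF s1 pi tau)) by ring.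
    rewrite sqrtrM ?mulr_ge0 ?ha ?hb //.
    rewrite (sqrtrM _ (sqr_ge0 _)) sqrtr_sqr ger0_norm ?algp //.
    by rewrite mulrA.
  apply: (@le_trans _ _ (\sum_pi Num.sqrt (a i * b i) * alg (h i) pi * rho)).
    by rewrite -big_distrl /= -big_distrr /= algs mulr1 mulrC.
  apply: ler_sum => pi _; apply: ler_wpM2l; last exact: hbc.
  by apply: mulr_ge0; [apply: sqrtr_ge0|apply: algp].
have hS : \sum_p (a' p + b' p) <= Sm.
  rewrite e3 /Sm; apply: ler_sum => i _.
  apply: (@le_trans _ _ (\sum_pi alg (h i) pi * (a i + b i))); last first.
    by rewrite -big_distrl /= algs mul1r.
  apply: ler_sum => pi _.
  have -> : \sum_tau (a' (i, (pi, tau)) + b' (i, (pi, tau))) =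
     alg (h i) pi * (a i * \sum_tau trajprob PT s1 pi tau + b i * \sum_tau trajprob PF s1 pi tau).
    rewrite big_split /= !big_distrr /= mulrDr !big_distrr /=.
    by congr (_ + _); apply: eq_bigr => tau _; rewrite /a' /b' /=; ring.
  apply: ler_wpM2l; first exact: algp.
  apply: lerD; rewrite -[X in _ <= X]mulr1; apply: ler_wpM2l; solve [apply: ha|apply: hb|apply: hsT|apply: hsF].
have IHa := IH _ nh a' b' ha' hb'.
apply: (le_trans _ (lerD h1 IHa)).
have h2 : Delta * k%:R * (rho ^+ k.+1 * B - Sm / 4) <=
   Delta * k%:R * (rho ^+ k * \sum_p Num.sqrt (a' p * b' p) - (\sum_p (a' p + b' p)) / 4).
  apply: ler_wpM2l; first by apply: mulr_ge0.
  apply: lerB; last by apply: ler_wpM2r.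
  by rewrite exprSr -mulrA; apply: ler_wpM2l.
apply: (le_trans _ (lerD (lexx _) h2)).
rewrite le_eqVlt; apply/orP; left; apply/eqP; rewrite -[(k.+1)%:R]natr1; ring.
Qed.

Lemma two_point m :
  Delta * m%:R * (rho ^+ m - 1 / 2) <= ET m [::] + EF m [::].
Proof.
have := @claim m 'I_1 (fun _ => [::]) (fun _ => 1) (fun _ => 1) (fun _ => ler01) (fun _ => ler01).
rewrite !big_ord1 mulr1 sqrtr1 mulr1 !mul1r.
have -> : (1 + 1) / 4 = 1 / 2 :> R by field.
by rewrite mul1r.
Qed.
End Info.

Lemma ExpReg_mono (R : realType) (S A : finType) (H : nat) (beta : R)
  (P : 'I_H -> S -> A -> S -> R) (r : 'I_H -> S -> A -> R)
  (alg : seq (obs R S A H) -> policy S A H -> R) (s1 : S) :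
  valid_alg alg ->
  (forall pi, 0 <= Vstar beta P r 0 s1 - Vpi beta P r pi 0 s1) ->
  (forall pi tau, 0 <= trajprob P s1 pi tau) ->
  forall k K h, (k <= K)%N -> ExpReg beta P r alg s1 k h <= ExpReg beta P r alg s1 K h.
Proof.
move=> halg hreg htr.
have step : forall k h, ExpReg beta P r alg s1 k h <= ExpReg beta P r alg s1 k.+1 h.
  elim=> [|k IH] h /=.
    apply: sumr_ge0 => pi _; apply: mulr_ge0; first exact: (halg h).1.
    apply: addr_ge0 => //; apply: sumr_ge0 => tau _; apply: mulr_ge0 => //.
  apply: ler_sum => pi _; apply: ler_wpM2l; first exact: (halg h).1.
  rewrite lerD2l; apply: ler_sum => tau _; apply: ler_wpM2l => //.
move=> k K h /subnK <-; elim: (K - k)%N => [|d IHd] //.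
by apply: (le_trans IHd); rewrite addSn; apply: step.
Qed.

Lemma sup_range_max (R : realType) (T : Type) (f : T -> R) t0 :
  (forall t, f t <= f t0) -> sup (range f) = f t0.
Proof.
move=> hf; apply/le_anti/andP; split.
  apply: ge_sup; first by exists (f t0), t0.
  by move=> y [t _ <-].
have hub : has_ubound (range f) by exists (f t0) => y [t _ <-].
by apply: (ub_le_sup hub); exists t0.
Qed.

Lemma EW_S (R : realType) (S A : finType) (H : nat) (beta : R)
  (P : 'I_H -> S -> A -> S -> R) (r : 'I_H -> S -> A -> R) pi m h s :
  EW beta P r pi m.+1 h s =
  match (insub h : option 'I_H) with
  | Some i => let a := pi i s in
      expR (beta * r i s a) * \sum_(s' : S) P i s a s' * EW beta P r pi m h.+1 s'
  | None => 1
  end.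
Proof. by []. Qed.

Definition b2r (R : realType) (s : bool) : R := if s then 1 else 0.

Section Mdp.
Variables (R : realType) (n : nat) (beta c0 pg pb : R) (x : bool).
Hypothesis hbeta : beta != 0.
Notation H := n.+2.
Definition pr (a : bool) : R := if a == x then pg else pb.
Definition Pm : 'I_H -> bool -> bool -> bool -> R := fun i s a s' =>
  if val i == 0%N then (if s' then pr a else 1 - pr a)
  else (if s' == s then 1 else 0).
Definition rm : 'I_H -> bool -> bool -> R := fun i s a =>
  if val i == 0%N then c0 else b2r R s.

Lemma Pm_tail i s a s' : val i != 0%N -> Pm i s a s' = if s' == s then 1 else 0.
Proof. by rewrite /Pm => /negbTE ->. Qed.
Lemma rm_tail i s a : val i != 0%N -> rm i s a = b2r R s.
Proof. by rewrite /rm => /negbTE ->. Qed.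
Lemma Pm_0 i s a s' : val i = 0%N -> Pm i s a s' = if s' then pr a else 1 - pr a.
Proof. by rewrite /Pm => ->. Qed.
Lemma rm_0 i s a : val i = 0%N -> rm i s a = c0.
Proof. by rewrite /rm => ->. Qed.

Lemma EW_tail (pi : policy bool bool H) m : forall h s, (1 <= h)%N -> (H - h <= m)%N ->
  EW beta Pm rm pi m h s = expR (beta * ((H - h)%:R * b2r R s)).
Proof.
elim: m => [|m IH] h s h1 hm /=.
  by move: hm; rewrite leqn0 => /eqP ->; rewrite mul0r mulr0 expR0.
case: insubP => [i hi vi|nh].
  have i0 : val i != 0%N by rewrite vi; case: h h1 {hm vi hi}.
  rewrite rm_tail // big_bool /= !Pm_tail //.
  have hm' : (H - h.+1 <= m)%N by rewrite subnS; move: hm; case: (H - h)%N.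
  rewrite !IH //.
  have eH : (H - h)%N = (H - h.+1).+1 by rewrite subnSK.
  rewrite eH -[(H - h.+1).+1]addn1 natrD.
  case: s; rewrite /b2r /= ?mulr0 ?mulr1 ?mul0r ?mul1r ?addr0 ?add0r ?expR0 ?mulr1 //.
  by rewrite -expRD; congr expR; ring.
have -> : (H - h = 0)%N by apply/eqP; rewrite subn_eq0 leqNgt.
by rewrite mul0r mulr0 expR0.
Qed.

Definition Ev := expR (beta * (n.+1)%:R).
Definition U (q : R) := expR (beta * c0) * (q * Ev + (1 - q)).
Definition pol (a : bool) : policy bool bool H := [ffun _ => [ffun _ => a]].

Lemma EW_0 (pi : policy bool bool H) s :
  EW beta Pm rm pi H 0 s = U (pr (pi ord0 s)).
Proof.
rewrite EW_S; case: insubP => [i hi vi|]; last by [].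
have -> : i = ord0 by apply: val_inj.
cbv zeta.
rewrite rm_0 // big_bool !Pm_0 // !EW_tail //= /b2r /U /Ev.
by rewrite subSS subn0 mulr1 mulr0 mulr0 expR0 mulr1.
Qed.

Lemma Vpi_tail (pi : policy bool bool H) h s : (1 <= h)%N ->
  Vpi beta Pm rm pi h s = (H - h)%:R * b2r R s.
Proof.
move=> h1; rewrite /Vpi EW_tail ?leq_subr // expRK.
by rewrite mulrC mulKf.
Qed.

Lemma Vpi_0 (pi : policy bool bool H) s :
  Vpi beta Pm rm pi 0 s = ln (U (pr (pi ord0 s))) / beta.
Proof. by rewrite /Vpi EW_0. Qed.

Lemma Vstar_tail h s : (1 <= h)%N -> Vstar beta Pm rm h s = (H - h)%:R * b2r R s.
Proof.
move=> h1; rewrite /Vstar (@sup_range_max _ _ _ (pol x)).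
  by rewrite Vpi_tail.
by move=> t; rewrite !Vpi_tail.
Qed.

Hypothesis hmono : ln (U pb) / beta <= ln (U pg) / beta.

Lemma Vstar_0 s : Vstar beta Pm rm 0 s = ln (U pg) / beta.
Proof.
rewrite /Vstar (@sup_range_max _ _ _ (pol x)).
  by rewrite Vpi_0 /pol !ffunE /pr eqxx.
move=> t; rewrite !Vpi_0 /pol !ffunE /pr eqxx.
by case: (_ == x).
Qed.

Lemma Qstar_0 s a : Qstar beta Pm rm ord0 s a = ln (U (pr a)) / beta.
Proof.
rewrite /Qstar rm_0 // big_bool !Pm_0 // !Vstar_tail //= /b2r /U /Ev.
by rewrite subSS subn0 mulr1 mulr0 mulr0 expR0 mulr1.
Qed.

Lemma Qstar_tail (i : 'I_H) s a : val i != 0%N ->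
  Qstar beta Pm rm i s a = Vstar beta Pm rm i s.
Proof.
move=> i0; rewrite /Qstar rm_tail // big_bool !Pm_tail // !Vstar_tail //.
2: by rewrite lt0n.
have eH : (H - i)%N = (H - i.+1).+1 by rewrite subnSK.
rewrite eH -[(H - i.+1).+1]addn1 natrD.
case: s; rewrite /b2r /= ?mulr0 ?mulr1 ?mul0r ?mul1r ?addr0 ?add0r ?expR0 ?mulr1 -?expRD ?expRK.
  by field.
by rewrite ln1 mul0r.
Qed.

Hypothesis hpg : 0 <= pg <= 1.
Hypothesis hpb : 0 <= pb <= 1.

Lemma U_gt0 q : 0 <= q <= 1 -> 0 < U q.
Proof.
case/andP=> q0 q1; rewrite /U; apply: mulr_gt0; first exact: expR_gt0.
have E0 : 0 < Ev by apply: expR_gt0.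
case: (ltrP q 1) => hq.
  have : 0 <= q * Ev by apply: mulr_ge0 => //; apply: ltW.
  lra.
have -> : q = 1 by apply: le_anti; rewrite q1 hq.
by rewrite mul1r subrr addr0.
Qed.

Lemma pr01 a : 0 <= pr a <= 1.
Proof. by rewrite /pr; case: (a == x). Qed.

Lemma expVQ y : 0 < y -> expR (beta * (ln y / beta)) = y.
Proof.
move=> y0; have -> : beta * (ln y / beta) = ln y by field.
by rewrite lnK // posrE.
Qed.

Lemma cgap_tail i s a tau : val i != 0%N -> cgap beta Pm rm i s a tau = 0.
Proof. by move=> i0; rewrite /cgap Qstar_tail // subrr mulr0. Qed.

Lemma cgap_0 i s a tau : val i = 0%N ->
  cgap beta Pm rm i s a tau = psi_beta H beta * (U pg - U (pr a)).
Proof.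
move=> i0; have -> : i = ord0 by apply: val_inj.
rewrite /cgap Qstar_0 big_pred0 // mulr0 expR0 mulr1.
have -> : Vstar beta Pm rm (nat_of_ord (@ord0 n.+1)) s = ln (U pg) / beta by apply: Vstar_0.
by rewrite !expVQ //; apply: U_gt0 => //; apply: pr01.
Qed.

Definition Dv := psi_beta H beta * (U pg - U pb).

Lemma min_cgap : Dv != 0 -> is_min_cgap beta Pm rm Dv.
Proof.
move=> hD; split.
  exists ord0, false, (~~ x), [ffun _ => (false, false)].
  have -> : cgap beta Pm rm ord0 false (~~ x) [ffun _ => (false, false)] = Dv.
    by rewrite cgap_0 // /pr; case: x.
  by [].
move=> i s a tau; case: (eqVneq (val i) 0%N) => i0; last by rewrite cgap_tail // eqxx.
rewrite cgap_0 // /pr; case: (a == x); first by rewrite subrr mulr0 eqxx.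
by [].
Qed.

Lemma reg_val (pi : policy bool bool H) s :
  Vstar beta Pm rm 0 s - Vpi beta Pm rm pi 0 s =
  if pi ord0 s == x then 0 else ln (U pg) / beta - ln (U pb) / beta.
Proof. by rewrite Vstar_0 Vpi_0 /pr; case: (_ == x); rewrite ?subrr. Qed.

Lemma valid_Pm : 0 <= c0 <= 1 -> valid_mdp Pm rm.
Proof.
move=> hc; split; [|split].
- move=> i s a s'; rewrite /Pm; case: (_ == _); last by case: (_ == _).
  by have := pr01 a; case: s'; lra.
- move=> i s a; rewrite big_bool /Pm; case: (_ == _).
    by rewrite /= addrC subrK.
  by case: s; rewrite /= ?addr0 ?add0r.
- move=> i s a; rewrite /rm; case: (_ == _) => //.
  by rewrite /b2r; case: s; rewrite ?ler01 ?lexx.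
Qed.

Definition tauv (s1 y : bool) : {ffun 'I_H -> bool} := [ffun i : 'I_H => if val i == 0%N then s1 else y].

Lemma nxt_tauv s1 y i : nxt (tauv s1 y) i = y.
Proof.
rewrite /nxt; case: insubP => [j _ vj|hn]; rewrite ffunE.
  by rewrite vj.
case: eqP => // i0; move: hn; rewrite i0 //.
Qed.

Lemma traj_tauv (pi : policy bool bool H) s1 y :
  trajprob Pm s1 pi (tauv s1 y) = if y then pr (pi ord0 s1) else 1 - pr (pi ord0 s1).
Proof.
rewrite /trajprob.
have -> : [forall i : 'I_H, (val i == 0%N) ==> (tauv s1 y i == s1)].
  by apply/forallP => i; apply/implyP => /eqP i0; rewrite ffunE i0 eqxx.
rewrite mul1r (bigD1 ord0) //= big1 ?mulr1.
  by rewrite Pm_0 // nxt_tauv ffunE /=.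
move=> i /andP [_ ni0].
have i0 : val i != 0%N by move: ni0; apply: contra => /eqP e; apply/eqP/val_inj.
by rewrite Pm_tail // nxt_tauv ffunE (negbTE i0) eqxx.
Qed.

Lemma traj_support (pi : policy bool bool H) s1 tau :
  trajprob Pm s1 pi tau != 0 -> tau = tauv s1 (tau (inord 1)).
Proof.
rewrite /trajprob; case: ifP => hf; last by rewrite mul0r eqxx.
rewrite mul1r => hp.
have step : forall j : 'I_H, (j.+1 < H)%N -> val j != 0%N -> tau (inord j.+1) = tau j.
  move=> j hj j0.
  have hfac : Pm j (tau j) (pi j (tau j)) (nxt tau j) != 0.
    by apply: contra hp => /eqP hz; apply/prodf_eq0; exists j => //; rewrite hz.
  rewrite Pm_tail // in hfac; move: hfac; case: (eqVneq (nxt tau j) (tau j)) => [e _|_]; last by rewrite eqxx.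
  rewrite -e /nxt; case: insubP => [k _ vk|]; last by rewrite hj.
  by congr (tau _); apply: val_inj; rewrite /= vk inordK.
have hall : forall k, (1 <= k)%N -> (k < H)%N -> tau (inord k) = tau (inord 1).
  elim=> [//|k IHk] _ hk.
  case: k IHk hk => [//|k] IHk hk.
  rewrite -IHk //; last by apply: ltnW.
  have := step (inord k.+1); rewrite inordK; last by apply: ltnW.
  move=> -> //.
  by rewrite /= inordK //; apply: ltnW.
apply/ffunP => i; rewrite ffunE; case: eqP => i0.
  by move/forallP: hf => /(_ i) /implyP /(_ (introT eqP i0)) /eqP.
rewrite -(hall i) //; first by rewrite inord_val.
by rewrite lt0n; apply/eqP.
Qed.

Lemma traj_ge0 (pi : policy bool bool H) s1 tau : 0 <= trajprob Pm s1 pi tau.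
Proof.
case: (eqVneq (trajprob Pm s1 pi tau) 0) => [-> //|/traj_support e].
rewrite e traj_tauv; have := pr01 (pi ord0 s1).
by case: (tau (inord 1)); lra.
Qed.
End Mdp.

Lemma sum_tauv (R : realType) n (s1 : bool) (f : {ffun 'I_n.+2 -> bool} -> R) :
  (forall tau, f tau != 0 -> tau = tauv n s1 (tau (inord 1))) ->
  \sum_tau f tau = f (tauv n s1 true) + f (tauv n s1 false).
Proof.
move=> hs.
have ne : tauv n s1 false != tauv n s1 true.
  apply/negP => /eqP /ffunP /(_ (inord 1)); rewrite !ffunE /= inordK //.
rewrite (bigD1 (tauv n s1 true)) //= (bigD1 (tauv n s1 false)) //= big1 ?addr0 //.
move=> tau /andP [n1 n2]; apply/eqP; apply: contraT => hz.
have := hs _ hz; case: (tau (inord 1)) => e.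
  by move: n1; rewrite e eqxx.
by move: n2; rewrite e eqxx.
Qed.

Lemma sqrt_am (R : realType) (a b : R) : 0 <= a -> 0 <= b ->
  Num.sqrt (a * b) <= (a + b) / 2.
Proof.
move=> a0 b0; rewrite sqrtrM //.
have ha := sqr_sqrtr a0; have hb := sqr_sqrtr b0.
set u := Num.sqrt a in ha *; set v := Num.sqrt b in hb *.
rewrite -ha -hb; have := sqr_ge0 (u - v); nra.
Qed.

Lemma core (R : realType) (n : nat) (beta c0 pg pb : R) (m K : nat) :
  beta != 0 -> 0 <= c0 <= 1 -> 0 <= pg <= 1 -> 0 <= pb <= 1 ->
  ln (U n beta c0 pb) / beta <= ln (U n beta c0 pg) / beta ->
  Dv n beta c0 pg pb != 0 ->
  (m <= K)%N ->
  3 / 4 <= (Num.sqrt (pg * pb) + Num.sqrt ((1 - pg) * (1 - pb))) ^+ m ->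
  forall alg : seq (obs R bool bool n.+2) -> policy bool bool n.+2 -> R, valid_alg alg ->
  exists (P : 'I_n.+2 -> bool -> bool -> bool -> R) (r : 'I_n.+2 -> bool -> bool -> R),
    valid_mdp P r /\ is_min_cgap beta P r (Dv n beta c0 pg pb) /\
    (ln (U n beta c0 pg) / beta - ln (U n beta c0 pb) / beta) * m%:R / 8
      <= ExpReg beta P r alg false K [::].
Proof.
move=> hb hc hpg hpb hmono hD hmK hrm alg halg.
set Delta := ln (U n beta c0 pg) / beta - ln (U n beta c0 pb) / beta.
set rho := Num.sqrt (pg * pb) + Num.sqrt ((1 - pg) * (1 - pb)).
have D0 : 0 <= Delta by rewrite subr_ge0.
have r0 : 0 <= rho by apply: addr_ge0; apply: sqrtr_ge0.
have r1 : rho <= 1.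
  case/andP: hpg => ? ?; case/andP: hpb => ? ?.
  have := sqrt_am (a:=pg) (b:=pb); have := sqrt_am (a:=1-pg) (b:=1-pb).
  rewrite /rho; lra.
set PT := Pm (n:=n) pg pb true. set PF := Pm (n:=n) pg pb false. set r := rm (n:=n) c0.
have regv := fun x => reg_val (n:=n) (beta:=beta) (c0:=c0) x hmono.
have hregT : forall pi, 0 <= Vstar beta PT r 0 false - Vpi beta PT r pi 0 false.
  by move=> pi; rewrite regv; case: (_ == _).
have hregF : forall pi, 0 <= Vstar beta PF r 0 false - Vpi beta PF r pi 0 false.
  by move=> pi; rewrite regv; case: (_ == _).
have hreg : forall pi, Delta <= Vstar beta PT r 0 false - Vpi beta PT r pi 0 false \/
                     Delta <= Vstar beta PF r 0 false - Vpi beta PF r pi 0 false.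
  by move=> pi; rewrite !regv; case: (pi ord0 false); [right|left].
have htT : forall pi tau, 0 <= trajprob PT false pi tau by move=> pi tau; apply: traj_ge0.
have htF : forall pi tau, 0 <= trajprob PF false pi tau by move=> pi tau; apply: traj_ge0.
have hsum : forall x pi, \sum_tau trajprob (Pm (n:=n) pg pb x) false pi tau = 1.
  move=> x pi; rewrite (@sum_tauv _ _ false); last by move=> tau; apply: traj_support.
  by rewrite !traj_tauv addrC subrK.
have hsT : forall pi, \sum_tau trajprob PT false pi tau <= 1 by move=> pi; rewrite hsum.
have hsF : forall pi, \sum_tau trajprob PF false pi tau <= 1 by move=> pi; rewrite hsum.
have hbc : forall pi, rho <= \sum_tau Num.sqrt (trajprob PT false pi tau * trajprob PF false pi tau).
  move=> pi; rewrite (@sum_tauv _ _ false); last first.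
    move=> tau hz; apply: (@traj_support _ _ pg pb true pi).
    by apply: contra hz => /eqP ->; rewrite mul0r sqrtr0.
  rewrite !traj_tauv /pr /rho; case: (pi ord0 false) => /=.
    by rewrite le_refl.
  by rewrite [pb * _]mulrC [(1 - pb) * _]mulrC le_refl.
have tp := two_point halg D0 r0 r1 hregT hregF hreg htT htF hsT hsF hbc m.
have key : Delta * m%:R / 4 <= ExpReg beta PT r alg false m [::] + ExpReg beta PF r alg false m [::].
  apply: le_trans tp.
  have h14 : 1 / 4 <= rho ^+ m - 1 / 2 by move: hrm; rewrite -/rho; lra.
  have := ler_wpM2l (mulr_ge0 D0 (ler0n _ m)) h14.
  by rewrite mul1r.
have monoT := ExpReg_mono halg hregT htT. have monoF := ExpReg_mono halg hregF htF.
case: (lerP (Delta * m%:R / 8) (ExpReg beta PT r alg false m [::])) => hT.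
  exists PT, r; split; first by apply: valid_Pm.
  split; first by apply: min_cgap.
  by apply: (le_trans hT); apply: monoT.
exists PF, r; split; first by apply: valid_Pm.
split; first by apply: min_cgap.
apply: le_trans (monoF _ _ _ hmK); lra.
Qed.

Lemma ln_diff_ge (R : realType) (y z : R) : 0 < y -> 0 < z -> (y - z) / y <= ln y - ln z.
Proof.
move=> y0 z0.
have := expR_ge1Dx (ln z - ln y).
rewrite expRD expRN !lnK ?posrE //.
have -> : (y - z) / y = 1 - z / y by field; rewrite gt_eqF.
lra.
Qed.

Lemma bern (R : realType) (rho : R) m : 0 <= rho -> rho <= 1 ->
  1 - m%:R * (1 - rho) <= rho ^+ m.
Proof.
move=> r0 r1; elim: m => [|m IH]; first by rewrite mul0r subr0 expr0.
rewrite exprS.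
have h1 : rho * (1 - m%:R * (1 - rho)) <= rho * rho ^+ m by apply: ler_wpM2l.
apply: le_trans h1.
rewrite -natr1.
have : 0 <= m%:R * ((1 - rho) * (1 - rho)) :> R by apply: mulr_ge0 => //; nra.
nra.
Qed.

Lemma sqrt_lb (R : realType) (p e : R) : 0 < p -> 0 <= e ->
  p + e / 2 - e ^+ 2 / (4 * p) <= Num.sqrt (p * (p + e)).
Proof.
move=> p0 e0.
set g := Num.sqrt (p * (p + e)).
have g0 : 0 <= g by apply: sqrtr_ge0.
have gg : g ^+ 2 = p * (p + e) by rewrite sqr_sqrtr //; nra.
have am := sqrt_am (ltW p0) (addr_ge0 (ltW p0) e0).
rewrite -/g in am.
have h1 : 2 * p * (p + e) <= g * (2 * p + e) by nra.
have h2 : (p + e / 2 - e ^+ 2 / (4 * p)) * (4 * p) = 4 * p ^+ 2 + 2 * p * e - e ^+ 2.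
  by field; rewrite gt_eqF.
have h3 : (4 * p ^+ 2 + 2 * p * e - e ^+ 2) * (2 * p + e) <= g * (2 * p + e) * (4 * p).
  have : 0 <= e ^+ 3 by apply: exprn_ge0.
  nra.
have h4 : (p + e / 2 - e ^+ 2 / (4 * p)) * ((2 * p + e) * (4 * p)) <= g * ((2 * p + e) * (4 * p)).
  have -> : (p + e / 2 - e ^+ 2 / (4 * p)) * ((2 * p + e) * (4 * p)) =
     ((p + e / 2 - e ^+ 2 / (4 * p)) * (4 * p)) * (2 * p + e) by ring.
  by rewrite h2; move: h3; rewrite !mulrA.
by rewrite -(ler_pM2r (_ : 0 < (2 * p + e) * (4 * p))) //; apply: mulr_gt0; nra.
Qed.

Lemma core2 (R : realType) (n : nat) (beta D : R) (m K : nat) :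
  beta != 0 -> 0 < D ->
  1 < expR (`|beta| * (n.+1)%:R) ->
  `|beta| * D <= 1 / 4 ->
  `|beta| * D / (expR (`|beta| * (n.+1)%:R) - 1) <= 1 / 24 ->
  (m <= K)%N ->
  m%:R * (5 / 8 * (`|beta| * D / (expR (`|beta| * (n.+1)%:R) - 1)) ^+ 2 *
          (expR (`|beta| * (n.+1)%:R) + 1)) <= 1 / 4 ->
  forall alg : seq (obs R bool bool n.+2) -> policy bool bool n.+2 -> R, valid_alg alg ->
  exists (P : 'I_n.+2 -> bool -> bool -> bool -> R) (r : 'I_n.+2 -> bool -> bool -> R),
    valid_mdp P r /\ is_min_cgap beta P r D /\
    D * m%:R / 20 <= ExpReg beta P r alg false K [::].
Proof.
move=> hb hD.
set a := `|beta|. set G := expR (a * (n.+1)%:R).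
move=> hG haD heps hmK hm alg halg.
set eps := a * D / (G - 1).
set s := 1 / (G + 1).
have {}heps : eps <= 1 / 24 := heps.
have {}hm : m%:R * (5 / 8 * eps ^+ 2 * (G + 1)) <= 1 / 4 := hm.
have a0 : 0 < a by rewrite normr_gt0.
have G1 : 0 < G - 1 by lra.
have s0 : 0 < s by rewrite divr_gt0 //; lra.
have sG : s * (G + 1) = 1 by rewrite /s mul1r mulVf //; rewrite gt_eqF //; lra.
have s2 : s <= 1 / 2 by nra.
have e0 : 0 < eps by rewrite /eps divr_gt0 // mulr_gt0.
have eG : eps * (G - 1) = a * D by rewrite /eps mulrVK // unitfE gt_eqF.
set q := 1 - s - eps.
have q0 : 11 / 24 <= q by rewrite /q; lra.
set rho0 := Num.sqrt (s * (s + eps)) + Num.sqrt (q * (q + eps)).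
have hrho : 1 - rho0 <= 5 / 8 * eps ^+ 2 * (G + 1).
  have l1 := sqrt_lb s0 (ltW e0).
  have l2 := sqrt_lb (_ : 0 < q) (ltW e0).
  have f1 : eps ^+ 2 / (4 * s) = eps ^+ 2 * (G + 1) / 4.
    rewrite /s; field.
    by rewrite gt_eqF //; lra.
  have f2 : eps ^+ 2 / (4 * q) <= 3 * eps ^+ 2 / 4.
    rewrite ler_pdivrMr; last by lra.
    have : 0 <= eps ^+ 2 by apply: sqr_ge0.
    nra.
  have e2 : 0 <= eps ^+ 2 by apply: sqr_ge0.
  have l2' := l2 ltac:(lra).
  rewrite /rho0; move: l1 l2'; rewrite f1; rewrite /q.
  nra.
have e2 : 0 <= eps ^+ 2 by apply: sqr_ge0.
have rho1 : rho0 <= 1.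
  have := sqrt_am (ltW s0) (_ : 0 <= s + eps); have := sqrt_am (_ : 0 <= q) (_ : 0 <= q + eps).
  rewrite /rho0 /q; move=> h1 h2; have := h1 ltac:(lra) ltac:(lra); have := h2 ltac:(lra).
  lra.
have rho00 : 0 <= rho0 by apply: addr_ge0; apply: sqrtr_ge0.
have hpow : 3 / 4 <= rho0 ^+ m.
  apply: le_trans (bern m rho00 rho1).
  have m0 : 0 <= m%:R :> R by apply: ler0n.
  have : m%:R * (1 - rho0) <= m%:R * (5 / 8 * eps ^+ 2 * (G + 1)) by apply: ler_wpM2l.
  lra.
have sG1 : s * (G - 1) = 1 - 2 * s by nra.
case: (ltrP 0 beta) => hbs.
- have aB : a = beta by rewrite /a gtr0_norm.
  have UE : forall x, U n beta 0 x = 1 + x * (G - 1).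
    by move=> x; rewrite /U /Ev mulr0 expR0 mul1r -aB -/G; ring.
  set y := 1 + (s + eps) * (G - 1). set z := 1 + s * (G - 1).
  have z0 : 0 < z by rewrite /z; nra.
  have y0 : 0 < y by rewrite /y; nra.
  have yz : y - z = a * D by rewrite /y /z -eG; ring.
  have y94 : y <= 9 / 4 by rewrite /y mulrDl sG1 eG; lra.
  have hDelta : 2 / 5 * D <= ln y / beta - ln z / beta.
    have L1 := ln_diff_ge y0 z0; rewrite yz in L1.
    have L2 : a * D * (4 / 9) <= a * D / y.
      rewrite ler_pdivlMr //.
      have : 0 < a * D by apply: mulr_gt0.
      nra.
    rewrite -mulrBl ler_pdivlMr // -aB.
    have : 0 < a * D by apply: mulr_gt0.
    nra.
  have hDv : Dv n beta 0 (s + eps) s = D.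
    rewrite /Dv /psi_beta hbs !UE -/y -/z yz -aB.
    by field; rewrite gt_eqF.
  have hpg : 0 <= s + eps <= 1 by apply/andP; split; lra.
  have hpb : 0 <= s <= 1 by apply/andP; split; lra.
  have hc : (0 <= (0:R)) && ((0:R) <= 1) by rewrite lexx ler01.
  have hmono : ln (U n beta 0 s) / beta <= ln (U n beta 0 (s + eps)) / beta.
    by rewrite !UE -/y -/z; lra.
  have hrm : 3 / 4 <= (Num.sqrt ((s + eps) * s) + Num.sqrt ((1 - (s + eps)) * (1 - s))) ^+ m.
    have -> : (1 - (s + eps)) * (1 - s) = q * (q + eps) by rewrite /q; ring.
    by rewrite [(s + eps) * s]mulrC.
  have hDv0 : Dv n beta 0 (s + eps) s != 0 by rewrite hDv gt_eqF.
  have [P [r [hv [hmin hE]]]] := core hb hc hpg hpb hmono hDv0 hmK hrm halg.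
  exists P, r; rewrite hDv in hmin; split => //; split => //.
  apply: le_trans hE; rewrite !UE -/y -/z.
  have m0 : 0 <= m%:R :> R by apply: ler0n.
  nra.
- have bn : beta < 0 by rewrite lt_neqAle hb hbs.
  have aB : a = - beta by rewrite /a ltr0_norm.
  have G0 : 0 < G by lra.
  set ea := expR a.
  have ea0 : 0 < ea by apply: expR_gt0.
  have w_ : expR beta = ea^-1 by rewrite /ea -expRN aB opprK.
  have EvG : Ev n beta = G^-1.
    rewrite /Ev /G -expRN; congr expR; rewrite aB; ring.
  set W := ea^-1 / G.
  have W0 : 0 < W by rewrite /W divr_gt0 // invr_gt0.
  have UE : forall x, U n beta 1 x = W * (x + G * (1 - x)).
    by move=> x; rewrite /U EvG mulr1 w_ /W; field; apply/andP; split; rewrite gt_eqF.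
  set y := U n beta 1 (1 - s). set z := U n beta 1 q.
  set Y := 1 + (s + eps) * (G - 1).
  have zY : z = W * Y by rewrite /z UE /Y /q; congr (_ * _); ring.
  have zy : z - y = W * (a * D) by rewrite /z /y !UE /q -eG; ring.
  have Y94 : Y <= 9 / 4 by rewrite /Y mulrDl sG1 eG; lra.
  have Y0 : 0 < Y by rewrite /Y; nra.
  have z0 : 0 < z by rewrite zY mulr_gt0.
  have y0 : 0 < y by rewrite /y UE mulr_gt0 //; nra.
  have hDelta : 2 / 5 * D <= ln y / beta - ln z / beta.
    have L1 := ln_diff_ge z0 y0; rewrite zy in L1.
    have L2 : a * D * (4 / 9) <= W * (a * D) / z.
      rewrite ler_pdivlMr // zY.
      have : 0 < a * D by apply: mulr_gt0.
      move=> aD0; have := mulr_gt0 W0 aD0; nra.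
    have -> : ln y / beta - ln z / beta = (ln z - ln y) / a by rewrite aB; field; rewrite lt_eqF.
    rewrite ler_pdivlMr //.
    have : 0 < a * D by apply: mulr_gt0.
    nra.
  have hDv : Dv n beta 1 (1 - s) q = D.
    rewrite /Dv /psi_beta (negbTE (_ : ~~ (0 < beta))); last by rewrite -leNgt.
    rewrite -/y -/z.
    have -> : y - z = - (W * (a * D)) by rewrite -zy; ring.
    have -> : - beta * (n.+2)%:R = a * (n.+1)%:R + a by rewrite aB -natr1; ring.
    rewrite expRD -/G -/ea /W aB.
    by field; rewrite (gt_eqF G0) (gt_eqF ea0) hb.
  have hpg : 0 <= 1 - s <= 1 by apply/andP; split; lra.
  have hpb : 0 <= q <= 1 by apply/andP; split; rewrite /q; lra.
  have hc : (0 <= (1:R)) && ((1:R) <= 1) by rewrite lexx ler01.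
  have hmono : ln (U n beta 1 q) / beta <= ln (U n beta 1 (1 - s)) / beta.
    by rewrite -/y -/z; lra.
  have hrm : 3 / 4 <= (Num.sqrt ((1 - s) * q) + Num.sqrt ((1 - (1 - s)) * (1 - q))) ^+ m.
    have -> : (1 - (1 - s)) * (1 - q) = s * (s + eps) by rewrite /q; ring.
    have -> : (1 - s) * q = q * (q + eps) by rewrite /q; ring.
    by rewrite addrC.
  have hDv0 : Dv n beta 1 (1 - s) q != 0 by rewrite hDv gt_eqF.
  have [P [r [hv [hmin hE]]]] := core hb hc hpg hpb hmono hDv0 hmK hrm halg.
  exists P, r; rewrite hDv in hmin; split => //; split => //.
  apply: le_trans hE; rewrite -/y -/z.
  have m0 : 0 <= m%:R :> R by apply: ler0n.
  nra.
Qed.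

Lemma pick_m (R : realType) (X c1 : R) (K : nat) : 0 < c1 -> 20 <= X -> c1 * X <= K%:R ->
  exists m : nat, [/\ (m <= K)%N, m%:R <= X / 5 & c1 / (1 + 10 * c1) * X <= m%:R].
Proof.
move=> c0 hX hK.
have kc : c1 / (1 + 10 * c1) <= c1.
  rewrite ler_pdivrMr; last by lra. nra.
have k10 : c1 / (1 + 10 * c1) <= 1 / 10.
  rewrite ler_pdivrMr; last by lra. lra.
have k0 : 0 <= c1 / (1 + 10 * c1) by apply: divr_ge0; lra.
have X0 : 0 <= X / 5 by lra.
have [t1 t2] := andP (trunc_itv X0).
exists (minn K (Num.trunc (X / 5))); split.
- exact: geq_minl.
- by apply: le_trans t1; rewrite ler_nat geq_minr.
- rewrite /minn; case: ltnP => _.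
    apply: le_trans hK; apply: ler_wpM2r => //; lra.
  have : X / 10 <= (Num.trunc (X / 5))%:R.
    move: t2; rewrite -[(Num.trunc (X / 5)).+1]addn1 natrD; lra.
  apply: le_trans; have : c1 / (1 + 10 * c1) * X <= 1 / 10 * X by apply: ler_wpM2r => //; lra.
  lra.
Qed.

Lemma part1 (R : realType) :
  (forall c1 c2 : R, 0 < c1 -> c1 <= c2 ->
   exists c : R, 0 < c /\
   forall (beta : R) (H : nat) (D : R) (K : nat),
     beta != 0 -> (2 <= H)%N -> 0 < D ->
     ln 4 <= `|beta| * (H%:R - 1) ->
     D <= (8 * `|beta|)^-1 ->
     c1 * ((expR (`|beta| * (H%:R - 1)) - 1) / (beta ^+ 2 * D ^+ 2)) <= K%:R ->
     K%:R <= c2 * ((expR (`|beta| * (H%:R - 1)) - 1) / (beta ^+ 2 * D ^+ 2)) ->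
     exists (S A : finType) (s1 : S),
     forall alg : seq (obs R S A H) -> policy S A H -> R, valid_alg alg ->
     exists (P : 'I_H -> S -> A -> S -> R) (r : 'I_H -> S -> A -> R),
       valid_mdp P r /\ is_min_cgap beta P r D /\
       c * ((expR (`|beta| * (H%:R - 1)) - 1) / (beta ^+ 2 * D))
         <= ExpReg beta P r alg s1 K [::]).
Proof.
move=> c1 c2 hc1 _.
set k := c1 / (1 + 10 * c1).
have k0 : 0 < k by rewrite /k divr_gt0 //; lra.
exists (k / 20); split; first by lra.
move=> beta [|[|n]] D K hb hH hD hln hD8 hK1 hK2 //.
have eH : (n.+2)%:R - 1 = (n.+1)%:R :> R by rewrite -[(n.+1).+1]addn1 natrD addrK.
rewrite eH in hln hK1 hK2 *.
set a := `|beta| in hln hD8 hK1 hK2 *.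
have b2 : beta ^+ 2 = a ^+ 2 by rewrite /a real_normK // num_real.
rewrite b2 in hK1 hK2 *.
set G := expR (a * (n.+1)%:R) in hln hK1 hK2 *.
have a0 : 0 < a by rewrite normr_gt0.
have G4 : 4 <= G by rewrite /G -[4]lnK ?posrE // ler_expR.
have aD : a * D <= 1 / 8.
  move: hD8; rewrite -[(8 * a)^-1]mul1r ler_pdivlMr; last by lra.
  lra.
set X := (G - 1) / (a ^+ 2 * D ^+ 2) in hK1 hK2 *.
have aD0 : 0 < a * D by apply: mulr_gt0.
have XaD : X * (a * D) ^+ 2 = G - 1 by rewrite /X; field; rewrite !gt_eqF.
have X0 : 0 < X by rewrite /X divr_gt0 //; [lra | apply: mulr_gt0; apply: exprn_gt0].
have X20 : 20 <= X.
  have : (a * D) ^+ 2 <= 1 / 64 by nra.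
  nra.
have [m [hmK hmX hkm]] := pick_m hc1 X20 hK1.
have heps : a * D / (G - 1) <= 1 / 24.
  rewrite ler_pdivrMr; last by lra.
  lra.
set e := a * D / (G - 1).
have eX : e ^+ 2 * X * (G - 1) = 1 by rewrite /e /X; field; rewrite !gt_eqF //; lra.
have hm : m%:R * (5 / 8 * e ^+ 2 * (G + 1)) <= 1 / 4.
  have m0 : 0 <= m%:R :> R by apply: ler0n.
  have e0 : 0 <= e ^+ 2 by apply: sqr_ge0.
  have h1 : m%:R * (5 / 8 * e ^+ 2 * (G + 1)) <= X / 5 * (5 / 8 * e ^+ 2 * (G + 1)).
    apply: ler_wpM2r => //; apply: mulr_ge0; [apply: mulr_ge0 => //|]; lra.
  apply: (le_trans h1).
  have -> : X / 5 * (5 / 8 * e ^+ 2 * (G + 1)) = (e ^+ 2 * X * (G - 1)) * (G + 1) / (8 * (G - 1)).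
    by field; lra.
  rewrite eX mul1r ler_pdivrMr; lra.
exists bool, bool, false => alg halg.
have G1 : 1 < G by lra.
have aD4 : a * D <= 1 / 4 by lra.
have [P [r [hv [hmin hE]]]] := core2 hb hD G1 aD4 heps hmK hm halg.
exists P, r; split => //; split => //.
apply: le_trans hE.
have -> : (G - 1) / (a ^+ 2 * D) = X * D by rewrite /X; field; rewrite !gt_eqF.
have : k * X * D <= m%:R * D by apply: ler_wpM2r => //; apply: ltW.
lra.
Qed.

Lemma part2 (R : realType) :
  (forall c1 c2 : R, 0 < c1 -> c1 <= c2 ->
   exists c : R, 0 < c /\
   forall (beta : R) (H : nat) (D : R) (K : nat),
     beta != 0 -> (8 <= H)%N -> 0 < D ->
     `|beta| * (H%:R - 1) <= ln H%:R ->
     D <= (expR (`|beta| * (H%:R - 1)) - 1) / (4 * `|beta| * H%:R) ->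
     c1 * ((expR (`|beta| * (H%:R - 1)) - 1) ^+ 2 / (H%:R * beta ^+ 2 * D ^+ 2))
       <= K%:R ->
     K%:R <= c2 * ((expR (`|beta| * (H%:R - 1)) - 1) ^+ 2
                     / (H%:R * beta ^+ 2 * D ^+ 2)) ->
     exists (S A : finType) (s1 : S),
     forall alg : seq (obs R S A H) -> policy S A H -> R, valid_alg alg ->
     exists (P : 'I_H -> S -> A -> S -> R) (r : 'I_H -> S -> A -> R),
       valid_mdp P r /\ is_min_cgap beta P r D /\
       c * (H%:R / D) <= ExpReg beta P r alg s1 K [::]).
Proof.
move=> c1 c2 hc1 _.
set k := c1 / (1 + 10 * c1).
have k0 : 0 < k by rewrite /k divr_gt0 //; lra.
exists (k / 40); split; first by lra.
move=> beta [|[|n]] D K hb hH hD hln hDle hK1 hK2 //.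
set Hr := (n.+2)%:R : R.
have H8 : 8 <= Hr by rewrite /Hr (ler_nat R 8).
have eH : Hr - 1 = (n.+1)%:R :> R by rewrite /Hr -[(n.+1).+1]addn1 natrD addrK.
rewrite -/Hr eH in hln hDle hK1 hK2 *.
set a := `|beta| in hln hDle hK1 hK2 *.
have b2 : beta ^+ 2 = a ^+ 2 by rewrite /a real_normK // num_real.
rewrite b2 in hK1 hK2 *.
set G := expR (a * (n.+1)%:R) in hln hDle hK1 hK2 *.
have a0 : 0 < a by rewrite normr_gt0.
have GH : G <= Hr by rewrite /G -[Hr]lnK ?posrE ?ler_expR //; lra.
have Gl : a * (Hr - 1) <= G - 1 by rewrite eH; have := expR_ge1Dx (a * (n.+1)%:R); rewrite -/G; lra.
have G1 : 1 < G.
  have : 0 < a * (Hr - 1) by apply: mulr_gt0 => //; lra.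
  move=> h; lra.
have aD0 : 0 < a * D by apply: mulr_gt0.
have aDH : 4 * Hr * (a * D) <= G - 1.
  move: hDle; rewrite ler_pdivlMr; last by apply: mulr_gt0 => //; lra.
  lra.
have aD4 : a * D <= 1 / 4 by nra.
set X := (G - 1) ^+ 2 / (Hr * a ^+ 2 * D ^+ 2) in hK1 hK2 *.
have XaD : X * Hr * (a * D) ^+ 2 = (G - 1) ^+ 2 by rewrite /X; field; rewrite !gt_eqF //; lra.
have X0 : 0 < X by rewrite /X divr_gt0 //; [apply: exprn_gt0; lra | apply: mulr_gt0; [apply: mulr_gt0; [lra|apply: exprn_gt0]|apply: exprn_gt0]].
have X20 : 20 <= X.
  have h1 : (4 * Hr * (a * D)) ^+ 2 <= (G - 1) ^+ 2 by rewrite ler_sqr ?nnegrE; [|nra|lra].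
  have h2 : 16 * Hr * (Hr * (a * D) ^+ 2) <= X * (Hr * (a * D) ^+ 2).
    have -> : X * (Hr * (a * D) ^+ 2) = (G - 1) ^+ 2 by rewrite -XaD mulrA.
    nra.
  have h3 : 16 * Hr <= X by rewrite -(ler_pM2r (_ : 0 < Hr * (a * D) ^+ 2)) //; apply: mulr_gt0; [lra|apply: exprn_gt0].
  lra.
have [m [hmK hmX hkm]] := pick_m hc1 X20 hK1.
have heps : a * D / (G - 1) <= 1 / 24.
  rewrite ler_pdivrMr; last by lra.
  nra.
set e := a * D / (G - 1).
have eX : e ^+ 2 * X * Hr = 1 by rewrite /e /X; field; rewrite !gt_eqF //; lra.
have hm : m%:R * (5 / 8 * e ^+ 2 * (G + 1)) <= 1 / 4.
  have m0 : 0 <= m%:R :> R by apply: ler0n.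
  have e0 : 0 <= e ^+ 2 by apply: sqr_ge0.
  have h1 : m%:R * (5 / 8 * e ^+ 2 * (G + 1)) <= X / 5 * (5 / 8 * e ^+ 2 * (G + 1)).
    apply: ler_wpM2r => //; apply: mulr_ge0; [apply: mulr_ge0 => //|]; lra.
  apply: (le_trans h1).
  have -> : X / 5 * (5 / 8 * e ^+ 2 * (G + 1)) = (e ^+ 2 * X * Hr) * (G + 1) / (8 * Hr).
    by field; lra.
  rewrite eX mul1r ler_pdivrMr; lra.
exists bool, bool, false => alg halg.
have [P [r [hv [hmin hE]]]] := core2 hb hD G1 aD4 heps hmK hm halg.
exists P, r; split => //; split => //.
apply: le_trans hE.
have h1 : k * X * D <= m%:R * D by apply: ler_wpM2r => //; apply: ltW.
have h2 : Hr / D <= 2 * (X * D).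
  rewrite -subr_ge0.
  have -> : 2 * (X * D) - Hr / D = (2 * (G - 1) ^+ 2 - Hr ^+ 2 * a ^+ 2) / (Hr * a ^+ 2 * D).
    by rewrite /X; field; rewrite !gt_eqF //; lra.
  apply: divr_ge0; last by apply: mulr_ge0; [apply: mulr_ge0; [lra|apply: sqr_ge0]|lra].
  have : (a * (Hr - 1)) ^+ 2 <= (G - 1) ^+ 2 by rewrite ler_sqr ?nnegrE; [|nra|lra].
  have hq : 0 <= Hr ^+ 2 - 4 * Hr + 2 by nra.
  have := mulr_ge0 (sqr_ge0 a) hq; nra.
have : k / 40 * (Hr / D) <= k / 20 * (X * D) by nra.
lra.
Qed.

Theorem theorem3 (R : realType) :
  (forall c1 c2 : R, 0 < c1 -> c1 <= c2 ->
   exists c : R, 0 < c /\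
   forall (beta : R) (H : nat) (D : R) (K : nat),
     beta != 0 -> (2 <= H)%N -> 0 < D ->
     ln 4 <= `|beta| * (H%:R - 1) ->
     D <= (8 * `|beta|)^-1 ->
     c1 * ((expR (`|beta| * (H%:R - 1)) - 1) / (beta ^+ 2 * D ^+ 2)) <= K%:R ->
     K%:R <= c2 * ((expR (`|beta| * (H%:R - 1)) - 1) / (beta ^+ 2 * D ^+ 2)) ->
     exists (S A : finType) (s1 : S),
     forall alg : seq (obs R S A H) -> policy S A H -> R, valid_alg alg ->
     exists (P : 'I_H -> S -> A -> S -> R) (r : 'I_H -> S -> A -> R),
       valid_mdp P r /\ is_min_cgap beta P r D /\
       c * ((expR (`|beta| * (H%:R - 1)) - 1) / (beta ^+ 2 * D))
         <= ExpReg beta P r alg s1 K [::])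
  /\
  (forall c1 c2 : R, 0 < c1 -> c1 <= c2 ->
   exists c : R, 0 < c /\
   forall (beta : R) (H : nat) (D : R) (K : nat),
     beta != 0 -> (8 <= H)%N -> 0 < D ->
     `|beta| * (H%:R - 1) <= ln H%:R ->
     D <= (expR (`|beta| * (H%:R - 1)) - 1) / (4 * `|beta| * H%:R) ->
     c1 * ((expR (`|beta| * (H%:R - 1)) - 1) ^+ 2 / (H%:R * beta ^+ 2 * D ^+ 2))
       <= K%:R ->
     K%:R <= c2 * ((expR (`|beta| * (H%:R - 1)) - 1) ^+ 2
                     / (H%:R * beta ^+ 2 * D ^+ 2)) ->
     exists (S A : finType) (s1 : S),
     forall alg : seq (obs R S A H) -> policy S A H -> R, valid_alg alg ->
     exists (P : 'I_H -> S -> A -> S -> R) (r : 'I_H -> S -> A -> R),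
       valid_mdp P r /\ is_min_cgap beta P r D /\
       c * (H%:R / D) <= ExpReg beta P r alg s1 K [::]).
Proof. by split; [apply: part1 | apply: part2]. Qed.
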